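(* A graph $G$ is degree-perfect if and only if $G$ has no induced subgraph isomorphic to a cycle of length other than $4$ (equivalently, $G$ is bipartite and every induced cycle of $G$ is a $4$-cycle).
   Context: All graphs are finite and simple. The biclique number $\tau(H)$ is the largest $t$ such that $H$ has a (not necessarily induced) subgraph isomorphic to $K_{t,t}$, and $\delta(H)$ is the minimum degree. A graph $G$ is degree-perfect if every induced subgraph $H$ of $G$ (with at least one vertex) satisfies $\delta(H)\le \tau(H)$. (It may be used that, by a theorem of Golumbic and Goss, every bipartite graph with at least one edge whose only induced cycles are $4$-cycles has a simplicial edge, i.e. an edge $uv$ such that every vertex of $N(u)$ is adjacent to every vertex of $N(v)$.) *)

(* Defs.v *)
(* A finite simple graph is a symmetric irreflexive
   relation e on a finType T; induced subgraphs are given by vertex sets. *)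
From mathcomp Require Import all_boot.
Set Implicit Arguments. Unset Strict Implicit. Unset Printing Implicit Defensive.

Section Graphs.
Variables (T : finType) (e : rel T).

Definition deg_in (S : {set T}) (v : T) : nat := #|[set w in S | e v w]|.

(* minimum degree delta(G[S]) (S nonempty in all uses; every degree <= #|T|) *)
Definition mindeg (S : {set T}) : nat := \big[minn/#|T|]_(v in S) deg_in S v.

Definition is_biclique (S A B : {set T}) : bool :=
  [&& A \subset S, B \subset S, [disjoint A & B], #|A| == #|B|
    & [forall a in A, forall b in B, e a b]].

Definition biclique_number (S : {set T}) : nat :=
  \max_(P : {set T} * {set T} | is_biclique S P.1 P.2) #|P.1|.

Definition degree_perfect : Prop :=
  forall S : {set T}, S != set0 -> mindeg S <= biclique_number S.

Definition cyc_adj (k : nat) (i j : 'I_k) : bool :=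
  (i.+1 %% k == j) || (j.+1 %% k == i).

Definition has_induced_cycle (k : nat) : Prop :=
  exists f : 'I_k -> T, injective f /\
    forall i j : 'I_k, e (f i) (f j) = cyc_adj i j.

End Graphs.

(* Main.v *)
Require Import Defs.
From mathcomp Require Import all_boot zify.
From Stdlib Require Import Classical.
Set Implicit Arguments. Unset Strict Implicit. Unset Printing Implicit Defensive.

Ltac slia :=
  repeat match goal with H : ?P |- _ =>
    lazymatch P with
    | is_true (leq _ _) => fail
    | @eq nat _ _ => fail
    | @eq bool (leq _ _) _ => fail
    | @eq bool (@eq_op Datatypes_nat__canonical__eqtype_Equality _ _) _ => fail
    | is_true (@eq_op Datatypes_nat__canonical__eqtype_Equality _ _) => fail
    | is_true (negb (@eq_op Datatypes_nat__canonical__eqtype_Equality _ _)) => fail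
    | _ => clear H
    end end; lia.

Lemma cyc_of_seq (T : finType) (e : rel T) (L : seq T) (x0 : T) (k : nat) :
  size L = k -> uniq L ->
  (forall i j, i < k -> j < k ->
     e (nth x0 L i) (nth x0 L j) = (i.+1 %% k == j) || (j.+1 %% k == i)) ->
  has_induced_cycle e k.
Proof.
move=> sL uL H; exists (fun i : 'I_k => nth x0 L i); split.
  move=> i j /eqP; rewrite nth_uniq ?sL // => /eqP; exact: val_inj.
by move=> i j; rewrite H.
Qed.

Lemma cycle3 (T : finType) (e : rel T) (a b c : T) :
  symmetric e -> irreflexive e -> uniq [:: a; b; c] ->
  e a b -> e b c -> e a c -> has_induced_cycle e 3.
Proof.
move=> es ei u ab bc ac.
have ba : e b a by rewrite es.
have cb : e c b by rewrite es.
have ca : e c a by rewrite es.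
apply: (@cyc_of_seq _ _ [:: a; b; c] a) => //.
by move=> [|[|[|i]]] [|[|[|j]]] //= _ _; rewrite ?ei ?ab ?ba ?bc ?cb ?ac ?ca.
Qed.

Lemma cycle6 (T : finType) (e : rel T) (a0 a1 a2 a3 a4 a5 : T) :
  symmetric e -> irreflexive e -> uniq [:: a0; a1; a2; a3; a4; a5] ->
  e a0 a1 -> e a1 a2 -> e a2 a3 -> e a3 a4 -> e a4 a5 -> e a5 a0 ->
  ~~ e a0 a2 -> ~~ e a0 a3 -> ~~ e a0 a4 -> ~~ e a1 a3 -> ~~ e a1 a4 ->
  ~~ e a1 a5 -> ~~ e a2 a4 -> ~~ e a2 a5 -> ~~ e a3 a5 ->
  has_induced_cycle e 6.
Proof.
move=> es ei u h01 h12 h23 h34 h45 h50 n02 n03 n04 n13 n14 n15 n24 n25 n35.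
have h10 : e a1 a0 by rewrite es.
have h21 : e a2 a1 by rewrite es.
have h32 : e a3 a2 by rewrite es.
have h43 : e a4 a3 by rewrite es.
have h54 : e a5 a4 by rewrite es.
have h05 : e a0 a5 by rewrite es.
have m02 := negbTE n02. have m03 := negbTE n03. have m04 := negbTE n04.
have m13 := negbTE n13. have m14 := negbTE n14. have m15 := negbTE n15.
have m24 := negbTE n24. have m25 := negbTE n25. have m35 := negbTE n35.
have m20 : e a2 a0 = false by rewrite es.
have m30 : e a3 a0 = false by rewrite es.
have m40 : e a4 a0 = false by rewrite es.
have m31 : e a3 a1 = false by rewrite es.
have m41 : e a4 a1 = false by rewrite es.
have m51 : e a5 a1 = false by rewrite es.
have m42 : e a4 a2 = false by rewrite es.
have m52 : e a5 a2 = false by rewrite es.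
have m53 : e a5 a3 = false by rewrite es.
apply: (@cyc_of_seq _ _ [:: a0; a1; a2; a3; a4; a5] a0) => //.
by move=> [|[|[|[|[|[|i]]]]]] [|[|[|[|[|[|j]]]]]] //= _ _;
  rewrite ?ei ?h01 ?h12 ?h23 ?h34 ?h45 ?h50 ?h10 ?h21 ?h32 ?h43 ?h54 ?h05
          ?m02 ?m03 ?m04 ?m13 ?m14 ?m15 ?m24 ?m25 ?m35
          ?m20 ?m30 ?m40 ?m31 ?m41 ?m51 ?m42 ?m52 ?m53.
Qed.

Lemma close_cycle (T : finType) (e : rel T) (w d : T) (q : seq T) :
  symmetric e -> irreflexive e -> 2 <= size q -> uniq (w :: q) ->
  (forall k, k.+1 < size q -> e (nth d q k) (nth d q k.+1)) ->
  (forall i j, i.+1 < j -> j < size q -> ~~ e (nth d q i) (nth d q j)) ->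
  (forall k, k < size q -> e w (nth d q k) = (k == 0) || (k == (size q).-1)) ->
  has_induced_cycle e (size q).+1.
Proof.
move=> es ei sq uq hw hn hz.
set n := size q in sq hw hn hz *.
have qadj : forall i j, i < n -> j < n ->
    e (nth d q i) (nth d q j) = (i.+1 == j) || (j.+1 == i).
  move=> i j hi hj.
  case: (ltngtP i j) => hij.
  - case: (eqVneq i.+1 j) => [ej|ne].
      by rewrite -ej hw ?eqxx //; rewrite ej.
    have/negbTE -> : ~~ e (nth d q i) (nth d q j) by apply: hn => //; lia.
    by apply/esym/negbTE; lia.
  - case: (eqVneq j.+1 i) => [ej|ne].
      by rewrite es -ej hw ?eqxx ?orbT //; rewrite ej.
    rewrite es; have/negbTE -> : ~~ e (nth d q j) (nth d q i) by apply: hn => //; lia.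
    by apply/esym/negbTE; lia.
  - by rewrite hij ei; apply/esym/negbTE; lia.
apply: (@cyc_of_seq _ _ (w :: q) d) => //.
have modS : forall i, i < n.+1 -> i.+1 %% n.+1 = if i == n then 0 else i.+1.
  move=> i hi; case: eqP => [->|ne]; first by rewrite modnn.
  by rewrite modn_small //; lia.
move=> [|i] [|j] hi hj /=.
- by rewrite ei modn_small //; lia.
- rewrite hz; last by lia.
  rewrite modn_small; last by lia.
  rewrite modS //; case: ifP => ?; lia.
- rewrite es hz; last by lia.
  rewrite [1 %% _]modn_small; last by lia.
  rewrite modS //; case: ifP => ?; lia.
- rewrite qadj; try lia.
  rewrite !modS //.
  case: ifP => ?; case: ifP => ?; lia.
Qed.

Definition walk (T : finType) (e : rel T) (D : {set T}) (a b : T) (q : seq T) : Prop :=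
  [/\ 0 < size q, nth a q 0 = a, nth a q (size q).-1 = b,
      forall k, k.+1 < size q -> e (nth a q k) (nth a q k.+1) &
      forall k, 0 < k -> k.+1 < size q -> nth a q k \in D].

Lemma nth_sc (T : Type) (a : T) (q : seq T) i j k :
  i <= j -> j <= size q ->
  nth a (take i q ++ drop j q) k = if k < i then nth a q k else nth a q (j + (k - i)).
Proof.
move=> ij jq; rewrite nth_cat size_takel; last by lia.
case: ifP => ki; first by rewrite nth_take.
by rewrite nth_drop.
Qed.

Lemma walk_sc (T : finType) (e : rel T) (D : {set T}) (a b : T) (q : seq T) i j :
  walk e D a b q -> i < j -> j < size q ->
  (if i == 0 then nth a q j == a else e (nth a q i.-1) (nth a q j)) ->
  walk e D a b (take i q ++ drop j q) /\ size (take i q ++ drop j q) < size q.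
Proof.
move=> [s0 h0 hl hw hD] ij jq J.
have sz : size (take i q ++ drop j q) = i + (size q - j).
  by rewrite size_cat size_takel ?size_drop //; lia.
split; last by rewrite sz; lia.
split.
- by rewrite sz; lia.
- rewrite nth_sc //; try lia.
  case: ifP => i0; first exact h0.
  move: J; have -> : i = 0 by lia.
  by rewrite subnn addn0 => /eqP.
- rewrite nth_sc //; try lia.
  rewrite sz; case: ifP => ?; first lia.
  by rewrite -hl; congr nth; lia.
- move=> k hk; rewrite sz in hk; rewrite !nth_sc //; try lia.
  case: ifP => k1; case: ifP => k2.
  + by apply: hw; lia.
  + have ek : k = i.-1 by lia.
    have -> : j + (k.+1 - i) = j by lia.
    by move: J; rewrite -ek; case: ifP => // /eqP; lia.
  + lia.
  + have -> : j + (k.+1 - i) = (j + (k - i)).+1 by lia.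
    by apply: hw; lia.
- move=> k k0 hk; rewrite sz in hk; rewrite !nth_sc //; try lia.
  case: ifP => k1.
  + by apply: hD; lia.
  + by apply: hD; lia.
Qed.

Lemma min_walk (T : finType) (e : rel T) (D : {set T}) (a b : T) (q : seq T) :
  walk e D a b q -> exists q', walk e D a b q' /\
    forall q'', walk e D a b q'' -> size q' <= size q''.
Proof.
have: forall n q, size q <= n -> walk e D a b q -> exists q', walk e D a b q' /\
    forall q'', walk e D a b q'' -> size q' <= size q''; last by move=> H; exact: H.
elim=> [|n IH] {}q hq wq.
  by case: wq => s0; lia.
case: (classic (exists q'', walk e D a b q'' /\ size q'' < size q)).
  by move=> [q'' [w'' s'']]; apply: (IH q'') => //; lia.
move=> nex; exists q; split => // q'' w''.
rewrite leqNgt; apply/negP => lt; apply: nex; by exists q''.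
Qed.

Lemma min_walk_props (T : finType) (e : rel T) (D : {set T}) (a b : T) (q : seq T) :
  walk e D a b q -> (forall q'', walk e D a b q'' -> size q <= size q'') ->
  uniq q /\ forall i j, i.+1 < j -> j < size q -> ~~ e (nth a q i) (nth a q j).
Proof.
move=> wq mq; split.
  case: (boolP (uniq q)) => // /(uniqPn a) [i [j [ij js eqij]]]; exfalso.
  have J : (if i == 0 then nth a q j == a else e (nth a q i.-1) (nth a q j)).
    case: wq => _ h0 _ hw _.
    case: ifP => i0; first by rewrite -eqij (eqP i0) h0.
    have i0' : 0 < i by lia.
    rewrite -eqij; have := hw i.-1; rewrite prednK // => h; apply: h. exact: ltn_trans ij js.
  have [w' s'] := walk_sc wq ij js J.
  by have := mq _ w'; lia.
move=> i j ij js; apply/negP => eij.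
have J : (if i.+1 == 0 then nth a q j == a else e (nth a q i.+1.-1) (nth a q j)) by [].
have [w' s'] := walk_sc wq ij js J.
by have := mq _ w'; lia.
Qed.

Definition CB (T : finType) (e : rel T) : Prop :=
  [/\ symmetric e, irreflexive e &
      forall k, 3 <= k -> k != 4 -> ~ has_induced_cycle e k].

Lemma adj_neq (T : finType) (e : rel T) a b : irreflexive e -> e a b -> a != b.
Proof. by move=> ei eab; apply/eqP => ab; move: eab; rewrite ab ei. Qed.

Lemma no_tri (T : finType) (e : rel T) : CB e ->
  forall a b c, e a b -> e b c -> e a c -> False.
Proof.
move=> [es ei nc] a b c ab bc ac.
apply: (nc 3) => //; apply: (cycle3 es ei _ ab bc ac).
rewrite /= !inE !negb_or (adj_neq ei ab) (adj_neq ei ac) (adj_neq ei bc) //.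
Qed.

Lemma path_all (T : finType) (r : rel T) (W : pred T) x p :
  (forall x y, r x y -> W y) -> path r x p -> all W p.
Proof.
move=> hW; elim: p x => //= y p IH x /andP [rxy hp].
by rewrite (hW _ _ rxy) (IH _ hp).
Qed.

Lemma walk_of_list (T : finType) (e : rel T) (D : {set T}) s t (L : seq T) :
  0 < size L -> e s (nth s L 0) -> e (last s L) t ->
  (forall i, i.+1 < size L -> e (nth s L i) (nth s L i.+1)) ->
  all (mem D) L -> walk e D s t (s :: rcons L t).
Proof.
move=> sL s0 lt hL aD.
split => //.
- by rewrite /= size_rcons /= nth_rcons ltnn eqxx.
- move=> [|k] /=; first by rewrite nth_rcons sL.
  rewrite size_rcons => hk.
  rewrite !nth_rcons.
  case: ifP => h1.
    case: ifP => h2; first by apply: hL.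
    have ek : k.+1 = size L by lia.
    rewrite ek eqxx.
    by rewrite -(nth_last s) -ek in lt.
  lia.
- move=> [|k] // _; rewrite /= size_rcons => hk.
  rewrite nth_rcons ifT; last by lia.
  have kL : k < size L by lia.
  by move/allP: aD => aD; apply: aD (mem_nth s kL).
Qed.

Definition farz (T : finType) (e : rel T) (z u : T) := (u != z) && ~~ e z u.
Definition Wset (T : finType) (e : rel T) (V : {set T}) z := [set x in V | farz e z x].
Definition relW (T : finType) (e : rel T) (V : {set T}) z :=
  [rel x y | [&& x \in Wset e V z, y \in Wset e V z & e x y]].
Definition Cset (T : finType) (e : rel T) (V : {set T}) z u0 :=
  [set y in Wset e V z | connect (relW e V z) u0 y].
Definition Sset (T : finType) (e : rel T) (V : {set T}) z u0 :=
  [set s in V | e z s && [exists c in Cset e V z u0, e s c]].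

Lemma relW_sym (T : finType) (e : rel T) V z : symmetric e -> symmetric (relW e V z).
Proof. by move=> es x y /=; rewrite es andbCA. Qed.

Lemma C_conn (T : finType) (e : rel T) V z u0 x y : symmetric e ->
  x \in Cset e V z u0 -> y \in Cset e V z u0 -> connect (relW e V z) x y.
Proof.
move=> es /setIdP [_ cx] /setIdP [_ cy].
apply: connect_trans cy; by rewrite (sym_connect_sym (@relW_sym _ e V z es)).
Qed.

Lemma C_closed (T : finType) (e : rel T) V z u0 x y :
  x \in Cset e V z u0 -> y \in Wset e V z -> e x y -> y \in Cset e V z u0.
Proof.
move=> /setIdP [xW cx] yW xy; rewrite inE yW /=.
by apply: connect_trans cx (connect1 _); rewrite /= xW yW.
Qed.

Lemma pairwise_lem (T : finType) (e : rel T) : CB e ->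
  forall V z u0 s t, s \in Sset e V z u0 -> t \in Sset e V z u0 -> s != t ->
  exists2 c, c \in Cset e V z u0 & e s c && e t c.
Proof.
move=> cb V z u0 s t hs ht st.
have [es ei nc] := cb.
set C := Cset e V z u0.
move: hs => /setIdP [sV /andP [zs /existsP [c1 /andP [c1C sc1]]]].
move: ht => /setIdP [tV /andP [zt /existsP [c2 /andP [c2C tc2]]]].
have := C_conn es c1C c2C => /connectP [p pth lastp].
have aC : all (mem C) (c1 :: p).
  apply/allP => y yin.
  have cy : connect (relW e V z) c1 y := path_connect pth yin.
  have yW : y \in Wset e V z.
    move: yin; rewrite inE => /orP [/eqP ->|yp]; first by case/setIdP: c1C.
    by move/allP: (path_all (W := mem (Wset e V z)) (fun x y (h : relW e V z x y) =>
       (let: conj _ h2 := andP h in (let: conj h3 _ := andP h2 in h3))) pth) => /(_ y yp).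
  change (y \in C); rewrite /C /Cset inE yW /=; apply: connect_trans cy.
  by case/setIdP: c1C.
have wq : walk e C s t (s :: rcons (c1 :: p) t).
  apply: walk_of_list => //.
  - by rewrite /= -lastp es.
  - move=> i hi.
    rewrite (set_nth_default c1 s hi) (set_nth_default c1 s (ltnW hi)) /=.
    move/(pathP c1): pth => H.
    have /andP [_ /andP [_ h]] := H i hi.
    exact: h.
have [q [wq' mq]] := min_walk wq.
have [uq nq] := min_walk_props wq' mq.
have CW : forall c, c \in C -> farz e z c.
  by move=> c /setIdP [/setIdP [_ h] _].
case: wq' => s0 h0 hl hw hD.
case: (ltngtP (size q) 3) => hs.
- exfalso.
  case: (size q) hs h0 hl hw => [|[|[|n]]] //= hs h0 hl hw;
    try by move: st; rewrite -h0 hl eqxx.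
  have := hw 0 isT; rewrite h0 hl => st'.
  exact: (no_tri cb zs st' zt).
- exfalso; apply: (nc (size q).+1); [slia | slia |].
  apply: (@close_cycle _ e z s q) => //; first slia.
  + rewrite /= uq andbT; apply/negP => /(@nthP _ q z s) [k hk0 hkz].
    have hk : k < size q := hk0.
    have k0 : 0 < k.
      case: k hk0 hk hkz => // _ _; rewrite h0 => sz.
      by move: zs; rewrite sz ei.
    have kl : k < (size q).-1.
      case: (ltngtP k (size q).-1) => // hk'; first slia.
      by move: zt; rewrite -hl -hk' hkz ei.
    have kq : k.+1 < size q by slia.
    by have := CW _ (hD k k0 kq); rewrite hkz /farz eqxx.
  + move=> k hk.
    case: (posnP k) => [->|k0]; first by rewrite h0 zs.
    case: (eqVneq k (size q).-1) => [->|kl]; first by rewrite hl zt orbT.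
    have kq : k.+1 < size q by slia.
    have := CW _ (hD k k0 kq); rewrite /farz => /andP [_ /negbTE ->].
    by apply/esym/negbTE; slia.
- exists (nth s q 1); first by apply: hD; rewrite ?hs.
  apply/andP; split; first by rewrite -{1}h0; apply: hw; rewrite hs.
  by rewrite es -hl hs; apply: hw; rewrite hs.
Qed.

Lemma neq_adj (T : finType) (e : rel T) u v w : e u w -> ~~ e v w -> u != v.
Proof. by move=> uw vw; apply/eqP => uv; move: vw; rewrite -uv uw. Qed.

Lemma helly (T : finType) (e : rel T) : CB e -> forall V z u0, u0 \in Wset e V z ->
  forall R : {set T}, R \subset Sset e V z u0 ->
  exists2 c, c \in Cset e V z u0 & forall s, s \in R -> e c s.
Proof.
move=> cb V z u0 u0W; have [es ei nc] := cb.
set C := Cset e V z u0; set S := Sset e V z u0.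
have u0C : u0 \in C by rewrite /C /Cset inE u0W connect0.
have CS : forall x y, x \in C -> y \in S -> x != y.
  move=> x y /setIdP [/setIdP [_ /andP [_ nzx]] _] /setIdP [_ /andP [zy _]].
  by apply/eqP => xy; move: nzx; rewrite xy zy.
have SN : forall y, y \in S -> exists2 c, c \in C & e c y.
  move=> y /setIdP [_ /andP [_ /existsP [c /andP [cC yc]]]].
  by exists c; rewrite // es.
move=> R; move: {2}#|R| (leqnn #|R|) => n.
elim: n R => [|n IH] R hR RS.
  exists u0 => // s sR; exfalso.
  have : 0 < #|R| by apply/card_gt0P; exists s.
  slia.
have [R0|/set0Pn [s sR]] := eqVneq R set0.
  by exists u0 => // s; rewrite R0 inE.
have sS : s \in S by apply: (subsetP RS).
case: (boolP (R \subset [set s])) => [Rs|/subsetPn [t tR ts]].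
  have [c cC cs] := SN s sS; exists c => // y /(subsetP Rs); rewrite inE => /eqP ->.
  exact: cs.
have tS : t \in S by apply: (subsetP RS).
have st : s != t by move: ts; rewrite inE eq_sym.
case: (boolP (R \subset [set s; t])) => [Rst|/subsetPn [r rR rst]].
  have [c cC /andP [sc tc]] := pairwise_lem cb sS tS st.
  exists c => // y /(subsetP Rst); rewrite !inE => /orP [/eqP ->|/eqP ->]; by rewrite es.
have rS : r \in S by apply: (subsetP RS).
move: rst; rewrite !inE negb_or => /andP [rs rt].
have sub : forall x, R :\ x \subset S.
  by move=> x; apply: subset_trans RS; apply: subD1set.
have card1 : forall x, x \in R -> #|R :\ x| <= n.
  by move=> x xR; move: hR; rewrite (cardsD1 x R) xR; slia.
have [xs xsC hxs] := IH _ (card1 _ sR) (sub s).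
have [xt xtC hxt] := IH _ (card1 _ tR) (sub t).
have [xr xrC hxr] := IH _ (card1 _ rR) (sub r).
have ext : forall x y, (forall w, w \in R :\ y -> e x w) -> e x y ->
    forall w, w \in R -> e x w.
  move=> x y hx xy w wR; case: (eqVneq w y) => [->//|wy].
  by apply: hx; rewrite !inE wy.
case: (boolP (e xs s)) => [h|nxs]; first by exists xs => //; apply: ext h.
case: (boolP (e xt t)) => [h|nxt]; first by exists xt => //; apply: ext h.
case: (boolP (e xr r)) => [h|nxr]; first by exists xr => //; apply: ext h.
have inD : forall x y, x \in R -> x != y -> x \in R :\ y.
  by move=> x y xR xy; rewrite !inE xy.
have xt_s : e xt s by apply: hxt; apply: inD => //.
have xt_r : e xt r by apply: hxt; apply: inD => //.
have xs_t : e xs t by apply: hxs; apply: inD; rewrite // eq_sym.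
have xs_r : e xs r by apply: hxs; apply: inD; rewrite // eq_sym.
have xr_s : e xr s by apply: hxr; apply: inD; rewrite // eq_sym.
have xr_t : e xr t by apply: hxr; apply: inD; rewrite // eq_sym.
exfalso; apply: (nc 6) => //.
apply: (@cycle6 _ e s xt r xs t xr es ei).
- rewrite /= !inE !negb_or.
  rewrite eq_sym (CS _ _ xtC sS) eq_sym rs st eq_sym (CS _ _ xsC sS) eq_sym (CS _ _ xrC sS).
  rewrite (CS _ _ xtC rS) (neq_adj xt_s nxs) (CS _ _ xtC tS) (neq_adj xt_r nxr).
  rewrite (eq_sym r xs) (CS _ _ xsC rS) rt (eq_sym r xr) (CS _ _ xrC rS).
  by rewrite (CS _ _ xsC tS) (neq_adj xs_r nxr) (eq_sym t xr) (CS _ _ xrC tS).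
- by rewrite es.
- done.
- by rewrite es.
- done.
- by rewrite es.
- done.
- by apply/negP => h; apply: (@no_tri _ _ cb s r xt h); rewrite es.
- by rewrite es.
- by apply/negP => h; apply: (@no_tri _ _ cb s t xr h); rewrite es.
- by apply/negP => h; apply: (@no_tri _ _ cb xt xs r h).
- done.
- by apply/negP => h; apply: (@no_tri _ _ cb xt xr s h).
- by apply/negP => h; apply: (@no_tri _ _ cb r t xs h); rewrite es.
- by rewrite es.
- by apply/negP => h; apply: (@no_tri _ _ cb xs xr t h).
Qed.

Definition bisimp (T : finType) (e : rel T) (V : {set T}) u v :=
  forall a b, a \in V -> b \in V -> e u a -> e v b -> e a b.

Definition good (T : finType) (e : rel T) (V : {set T}) z u v :=
  [/\ u \in V, v \in V, farz e z u, farz e z v & e u v].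

Lemma lemA (T : finType) (e : rel T) : CB e -> forall n (V : {set T}) z,
  #|V| <= n -> z \in V -> (exists u0 v0, good e V z u0 v0) ->
  exists u v, good e V z u v /\ bisimp e V u v.
Proof.
move=> cb; have [es ei nc] := cb.
elim=> [|n IH] V z hV zV [u0 [v0 [u0V v0V fu0 fv0 e0]]].
  have : 0 < #|V| by apply/card_gt0P; exists z.
  by rewrite ltnNge hV.
have u0W : u0 \in Wset e V z by rewrite inE u0V fu0.
have v0W : v0 \in Wset e V z by rewrite inE v0V fv0.
set C := Cset e V z u0; set S := Sset e V z u0.
have u0C : u0 \in C by rewrite /C /Cset inE u0W connect0.
have v0C : v0 \in C by apply: C_closed u0C v0W e0.
have CV : forall c, c \in C -> (c \in V) && farz e z c.
  by move=> c /setIdP [/setIdP [cV fc] _]; rewrite cV fc.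
have SV : forall s, s \in S -> (s \in V) && e z s.
  by move=> s /setIdP [sV /andP [zs _]]; rewrite sV zs.
have nbr : forall c a, c \in C -> a \in V -> e c a -> (a \in C) || (a \in S).
  move=> c a cC aV ca.
  have /andP [_ /andP [cz nzc]] := CV c cC.
  case: (boolP (e z a)) => za.
    by apply/orP; right; rewrite inE aV za /=; apply/existsP; exists c; rewrite cC es.
  have az : a != z by apply/eqP => az; move: nzc; rewrite -az es ca.
  by apply/orP; left; apply: C_closed cC _ ca; rewrite inE aV /farz az za.
set V' := C :|: S :|: [set z].
have V'V : V' \subset V.
  apply/subsetP => x; rewrite !in_setU in_set1 => /orP [/orP [xC|xS]|/eqP ->] //.
  - by case/andP: (CV x xC).
  - by case/andP: (SV x xS).
case: (boolP (V \subset V')) => [VV'|nVV'].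
- have [cs csC hcs] := helly cb u0W (subxx S).
  have /andP [csV fcs] := CV cs csC.
  have csz : cs != z by case/andP: fcs.
  have inS : forall b, b \in V -> e z b -> forall w, w \in C -> e b w -> b \in S.
    move=> b bV zb w wC bw; rewrite /S /Sset inE bV zb /=.
    by apply/existsP; exists w; rewrite wC bw.
  have notS : forall x, x \in C -> x \notin S.
    move=> x /CV /andP [_ /andP [_ nzx]]; apply/negP => /SV /andP [_ zx].
    by move: nzx; rewrite zx.
  set V1 := V :\ z.
  have c1 : #|V1| <= n by move: hV; rewrite /V1 (cardsD1 z V) zV /=; slia.
  case: (classic (exists u v, good e V1 cs u v)) => [ex1|nex1].
    have csV1 : cs \in V1 by rewrite in_setD1 csz csV.
    have [u [v [[uV1 vV1 fu fv uv] huv]]] := IH V1 cs c1 csV1 ex1.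
    have inC : forall x, x \in V1 -> farz e cs x -> x \in C.
      move=> x; rewrite in_setD1 => /andP [xz xV] /andP [xcs nx].
      move: (subsetP VV' x xV); rewrite !in_setU in_set1 (negbTE xz) orbF.
      case/orP => // xS; by move: nx; rewrite hcs.
    have uC := inC u uV1 fu; have vC := inC v vV1 fv.
    have /andP [uV fzu] := CV u uC; have /andP [vV fzv] := CV v vC.
    exists u, v; split; first by split.
    move=> a b aV bV ua vb; apply: huv => //.
    * rewrite in_setD1 aV andbT; apply/eqP => az; move: fzu; rewrite /farz -az es ua.
      by rewrite andbF.
    * rewrite in_setD1 bV andbT; apply/eqP => bz; move: fzv; rewrite /farz -bz es vb.
      by rewrite andbF.
  set V2 := V :\ cs.
  have c2 : #|V2| <= n by move: hV; rewrite /V2 (cardsD1 cs V) csV /=; slia.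
  have zV2 : z \in V2 by rewrite in_setD1 eq_sym csz zV.
  case: (classic (exists u v, good e V2 z u v)) => [ex2|nex2].
    have [u [v [[uV2 vV2 fu fv uv] huv]]] := IH V2 z c2 zV2 ex2.
    move: (uV2) (vV2); rewrite !in_setD1 => /andP [ucs uV] /andP [vcs vV].
    have inV1 : forall x, x \in V -> farz e z x -> x \in V1.
      by move=> x xV /andP [xz _]; rewrite in_setD1 xz xV.
    have nz : forall x y, farz e z x -> e x y -> y \in V -> farz e z y \/ (y != z).
      move=> x y /andP [xz nzx] xy yV; right; apply/eqP => yz; move: nzx.
      by rewrite -yz es xy.
    exists u, v; split; first by split.
    move=> a b aV bV ua vb.
    case: (eqVneq a cs) => [acs|acs]; case: (eqVneq b cs) => [bcs|bcs].
    + exfalso; rewrite acs in ua; rewrite bcs in vb.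
      exact: (no_tri cb uv vb ua).
    + rewrite acs in ua *; apply/negPn/negP => nb; apply: nex1; exists v, b; split => //.
      * exact: inV1.
      * rewrite in_setD1 bV andbT; apply/eqP => bz; move: fv; rewrite /farz -bz es vb.
        by rewrite andbF.
      * rewrite /farz vcs /=; apply/negP => csv; apply: (no_tri cb uv _ ua).
        by rewrite es.
      * by rewrite /farz bcs.
    + rewrite bcs in vb *; apply/negPn/negP => na; apply: nex1; exists u, a; split => //.
      * exact: inV1.
      * rewrite in_setD1 aV andbT; apply/eqP => az; move: fu; rewrite /farz -az es ua.
        by rewrite andbF.
      * rewrite /farz ucs /=; apply/negP => csu; apply: (no_tri cb uv vb).
        by rewrite es.
      * by rewrite /farz acs /= es.
    + by apply: huv; rewrite // in_setD1 ?acs ?bcs.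
  have key : forall w, w \in C -> e cs w -> exists u v, good e V z u v /\ bisimp e V u v.
    move=> w wC csw.
    have /andP [wV fzw] := CV w wC.
    exists cs, w; split; first by split.
    move=> a b aV bV csa wb.
    case: (eqVneq b cs) => [->|bcs]; first by rewrite es.
    exfalso; apply: nex2; exists w, b; split => //.
    * by rewrite in_setD1 wV andbT eq_sym (adj_neq ei csw).
    * by rewrite in_setD1 bV andbT bcs.
    * rewrite /farz; apply/andP; split.
        apply/eqP => bz; move: fzw; rewrite /farz -bz es wb.
        by rewrite andbF.
      apply/negP => zb; have bS := inS b bV zb w wC (_ : e b w).
      by apply: (no_tri cb csw wb (hcs b (bS _))); rewrite es.
  case: (eqVneq u0 cs) => [u0cs|u0cs].
    by apply: (key v0 v0C); rewrite -u0cs.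
  case: (eqVneq v0 cs) => [v0cs|v0cs].
    by apply: (key u0 u0C); rewrite -v0cs es.
  exfalso; apply: nex2; exists u0, v0; split => //.
  * by rewrite in_setD1 u0cs u0V.
  * by rewrite in_setD1 v0cs v0V.
- have lt : #|V'| < #|V| by apply: proper_card; rewrite properE V'V nVV'.
  have [u [v [[uV vV fu fv uv] huv]]] : exists u v, good e V' z u v /\ bisimp e V' u v.
    apply: IH; first by slia.
      by rewrite !in_setU in_set1 eqxx orbT.
    by exists u0, v0; split; rewrite // !in_setU ?u0C ?v0C.
  have inC : forall x, x \in V' -> farz e z x -> x \in C.
    move=> x; rewrite !in_setU in_set1 => /orP [/orP [//|xS]|/eqP xz] /andP [xz' nzx].
      by move: nzx; case/andP: (SV x xS) => _ ->.
    by move: xz'; rewrite xz eqxx.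
  have uC := inC u uV fu; have vC := inC v vV fv.
  exists u, v; split; first split => //.
  + by case/andP: (CV u uC).
  + by case/andP: (CV v vC).
  + move=> a b aV bV ua vb; apply: huv => //.
    * by rewrite /V' !in_setU; case/orP: (nbr u a uC aV ua) => ->; rewrite ?orbT.
    * by rewrite /V' !in_setU; case/orP: (nbr v b vC bV vb) => ->; rewrite ?orbT.
Qed.

Lemma modS_cases k x : x < k ->
  (x.+1 %% k = x.+1 /\ x.+1 < k) \/ (x.+1 %% k = 0 /\ x.+1 = k).
Proof.
move=> xk; case: (ltngtP x.+1 k) => h; first by left; rewrite modn_small.
  lia.
by right; rewrite h modnn.
Qed.

Lemma c4_only k (i1 i2 j1 j2 : 'I_k) : 3 <= k -> k != 4 -> i1 != i2 -> j1 != j2 ->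
  cyc_adj i1 j1 -> cyc_adj i1 j2 -> cyc_adj i2 j1 -> cyc_adj i2 j2 -> False.
Proof.
rewrite /cyc_adj => k3 k4 ni nj.
have := modS_cases (ltn_ord i1); have := modS_cases (ltn_ord i2).
have := modS_cases (ltn_ord j1); have := modS_cases (ltn_ord j2).
have := ltn_ord i1; have := ltn_ord i2; have := ltn_ord j1; have := ltn_ord j2.
move: ni nj; rewrite -!(inj_eq val_inj) /=.
move: (nat_of_ord i1) (nat_of_ord i2) (nat_of_ord j1) (nat_of_ord j2) => a b c d.
move: (a.+1 %% k) (b.+1 %% k) (c.+1 %% k) (d.+1 %% k) => a' b' c' d'.
move=> *; lia.
Qed.

Lemma bigmin_le (I : eqType) (r : seq I) (P : pred I) (F : I -> nat) idx i :
  i \in r -> P i -> \big[minn/idx]_(j <- r | P j) F j <= F i.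
Proof.
elim: r => //= x r IH; rewrite inE big_cons => /orP [/eqP <-|ir] Pi.
  by rewrite Pi geq_minl.
case: ifP => _; last exact: IH.
by rewrite geq_min IH ?orbT.
Qed.

Lemma fwd (T : finType) (e : rel T) : symmetric e -> irreflexive e ->
  degree_perfect e -> forall k, 3 <= k -> k != 4 -> ~ has_induced_cycle e k.
Proof.
move=> es ei dp k k3 k4 [f [finj fadj]].
have k0 : 0 < k by slia.
set S := [set f i | i : 'I_k].
have Sn0 : S != set0 by apply/set0Pn; exists (f (Ordinal k0)); apply: imset_f.
have := dp S Sn0.
have lo : 1 < mindeg e S.
  rewrite /mindeg; apply: (big_ind (fun x => 1 < x)).
  - have := leq_card f finj; rewrite card_ord; slia.
  - by move=> x y hx hy; rewrite leq_min hx hy.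
  - move=> v /imsetP [i _ ->].
    have sk : i.+1 %% k < k by apply: ltn_pmod.
    have pk : (if i == 0 :> nat then k.-1 else i.-1) < k.
      by case: ifP => _; have := ltn_ord i; slia.
    apply/card_gt1P; exists (f (Ordinal sk)), (f (Ordinal pk)); split.
    + by rewrite inE imset_f //= fadj /cyc_adj /= eqxx.
    + rewrite inE imset_f //= fadj /cyc_adj /=; apply/orP; right.
      case: ifP => [/eqP ->|i0].
        by rewrite prednK // modnn.
      by rewrite prednK ?modn_small //; slia.
    + rewrite (inj_eq finj) -(inj_eq val_inj) /=.
      have := modS_cases (ltn_ord i); have := ltn_ord i.
      move: (nat_of_ord i) => a; move: (a.+1 %% k) => a'.
      by case: ifP => ?; slia.
have hi : biclique_number e S <= 1.
  apply/bigmax_leqP => [[A B]] /= /and5P [AS BS dAB cAB all].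
  rewrite leqNgt; apply/negP => A1.
  have B1 : 1 < #|B| by rewrite -(eqP cAB).
  move: A1 B1 => /card_gt1P [a1 [a2 [a1A a2A na]]] /card_gt1P [b1 [b2 [b1B b2B nb]]].
  have E : forall a b, a \in A -> b \in B -> e a b.
    by move=> a b aA bB; move/forall_inP: all => /(_ a aA) /forall_inP /(_ b bB).
  have inS : forall x, x \in A :|: B -> exists i, x = f i.
    move=> x; rewrite in_setU => /orP [/(subsetP AS)|/(subsetP BS)] /imsetP [i _ ->];
    by exists i.
  have [i1 ei1] : exists i, a1 = f i by apply: inS; rewrite in_setU a1A.
  have [i2 ei2] : exists i, a2 = f i by apply: inS; rewrite in_setU a2A.
  have [j1 ej1] : exists i, b1 = f i by apply: inS; rewrite in_setU b1B orbT.
  have [j2 ej2] : exists i, b2 = f i by apply: inS; rewrite in_setU b2B orbT.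
  apply: (@c4_only k i1 i2 j1 j2) => //.
  - by apply/eqP => ii; move: na; rewrite ei1 ei2 ii eqxx.
  - by apply/eqP => jj; move: nb; rewrite ej1 ej2 jj eqxx.
  - by rewrite -fadj -ei1 -ej1 E.
  - by rewrite -fadj -ei1 -ej2 E.
  - by rewrite -fadj -ei2 -ej1 E.
  - by rewrite -fadj -ei2 -ej2 E.
move=> h; move: lo hi h; slia.
Qed.

Lemma sub_card (T : finType) (A : {set T}) (k : nat) : k <= #|A| ->
  exists2 A' : {set T}, A' \subset A & #|A'| = k.
Proof.
move=> kA; exists [set x in take k (enum A)].
  by apply/subsetP => x; rewrite inE => /mem_take; rewrite mem_enum.
rewrite cardsE; move/card_uniqP: (take_uniq k (enum_uniq (mem A))) => ->.
by rewrite size_takel // -cardE.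
Qed.

Lemma mindeg_le (T : finType) (e : rel T) (S : {set T}) v :
  v \in S -> mindeg e S <= deg_in e S v.
Proof. by move=> vS; apply: bigmin_le => //; rewrite mem_index_enum. Qed.

Lemma exists_bisimp (T : finType) (e : rel T) : CB e -> forall S : {set T},
  (exists u0 v0, [/\ u0 \in S, v0 \in S & e u0 v0]) ->
  exists u v, [/\ u \in S, v \in S, e u v & bisimp e S u v].
Proof.
move=> cb S [u0 [v0 [u0S v0S e0]]]; have [es ei nc] := cb.
case: (classic (exists a b, [/\ a \in S, b \in S, e u0 a, e v0 b & ~~ e a b])).
  move=> [a [b [aS bS ua vb nab]]].
  have [u [v [[uS vS _ _ uv] huv]]] : exists u v, good e S a u v /\ bisimp e S u v.
    apply: (lemA cb (leqnn #|S|) aS); exists v0, b; split => //.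
    - rewrite /farz; apply/andP; split.
        by apply/eqP => va; move: nab; rewrite -va vb.
      by apply/negP => av; apply: (no_tri cb ua av e0).
    - rewrite /farz nab andbT; apply/eqP => ba.
      by apply: (no_tri cb e0 _ ua); rewrite -ba.
  by exists u, v.
move=> nex; exists u0, v0; split => // a b aS bS ua vb.
by apply/negPn/negP => nab; apply: nex; exists a, b.
Qed.

Lemma bwd (T : finType) (e : rel T) : CB e -> degree_perfect e.
Proof.
move=> cb S Sn0; have [es ei nc] := cb.
case: (classic (exists u0 v0, [/\ u0 \in S, v0 \in S & e u0 v0])) => [ex|nex].
  have [u [v [uS vS uv huv]]] := exists_bisimp cb ex.
  set A := [set x in S | e u x]; set B := [set x in S | e v x].
  have [A' A'A cA'] := sub_card (geq_minl #|A| #|B|).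
  have [B' B'B cB'] := sub_card (geq_minr #|A| #|B|).
  have bc : is_biclique e S A' B'.
    apply/and5P; split.
    - by apply/subsetP => x /(subsetP A'A); rewrite inE => /andP [].
    - by apply/subsetP => x /(subsetP B'B); rewrite inE => /andP [].
    - rewrite disjoint_subset; apply/subsetP => x /(subsetP A'A) xA.
      rewrite inE; apply/negP => /(subsetP B'B) xB.
      move: xA xB; rewrite !inE => /andP [xS ux] /andP [_ vx].
      by move: (huv x x xS xS ux vx); rewrite ei.
    - by rewrite cA' cB'.
    - apply/forall_inP => a /(subsetP A'A); rewrite inE => /andP [aS ua].
      apply/forall_inP => b /(subsetP B'B); rewrite inE => /andP [bS vb].
      exact: huv.
  have : #|A'| <= biclique_number e S.
    exact: (@leq_bigmax_cond _ (fun P : {set T} * {set T} => is_biclique e S P.1 P.2) (fun P => #|P.1|) (A', B') bc).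
  rewrite cA' => h; apply: leq_trans h.
  by rewrite leq_min !mindeg_le.
have [v vS] := set0Pn _ Sn0.
apply: leq_trans (mindeg_le e vS) _.
suff -> : deg_in e S v = 0 by [].
apply/eqP; rewrite cards_eq0; apply/eqP/setP => w; rewrite !inE.
by apply/negP => /andP [wS vw]; apply: nex; exists v, w.
Qed.

Unset Implicit Arguments.

Theorem theorem3p7 (T : finType) (e : rel T) :
  symmetric e -> irreflexive e ->
  (degree_perfect e <->
   forall k : nat, 3 <= k -> k != 4 -> ~ has_induced_cycle e k).
Proof.
move=> es ei; split; first exact: fwd.
by move=> nc; apply: bwd.
Qed.
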